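(* Let $g\colon[r]^d\to\{0,1\}$ be $k$-monotone and let $f=(-1)^{g}\colon[r]^d\to\{-1,1\}$. Then $\mathrm{Inf}[f]\leq k\sqrt{d}$.
   Context: $[r]^d$ is ordered coordinatewise; $g$ is $k$-monotone if there is no chain $x_1\preceq\cdots\preceq x_{k+1}$ with $g(x_1)=1$ and $g(x_i)\neq g(x_{i+1})$ for all $i\in[k]$. For $f\colon[r]^d\to\{-1,1\}$, $\mathrm{Inf}_i[f]=2\Pr[f(x)\neq f(x^{(i)})]$, where $x$ is uniform in $[r]^d$ and $x^{(i)}$ is obtained from $x$ by replacing $x_i$ with an independent uniform element of $[r]$; $\mathrm{Inf}[f]=\sum_{i=1}^d\mathrm{Inf}_i[f]$. *)

(* Defs.v *)
From HB Require Import structures.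
From mathcomp Require Import all_boot all_order all_algebra.
Set Implicit Arguments. Unset Strict Implicit. Unset Printing Implicit Defensive.
Import Order.TTheory GRing.Theory Num.Theory.
Local Open Scope ring_scope.

(* [r]^d, with [r] represented as 'I_r = {0,...,r-1} (order-isomorphic to {1,...,r}) *)
Definition point (d r : nat) := {ffun 'I_d -> 'I_r}.

Definition pleq (d r : nat) (x y : point d r) : bool := [forall i, (x i <= y i)%N].

(* g : [r]^d -> {0,1} encoded as bool (true = 1).
   k-monotone: no chain c 0 <= c 1 <= ... <= c k (i.e. x_1,...,x_{k+1})
   with g (c 0) = 1 and g (c i) <> g (c (i+1)) for all i < k. *)
Definition k_monotone (d r k : nat) (g : point d r -> bool) : Prop :=
  ~ exists c : nat -> point d r,
      (forall i, (i < k)%N -> pleq (c i) (c i.+1)) /\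
      g (c 0%N) = true /\
      (forall i, (i < k)%N -> g (c i) != g (c i.+1)).

Definition upd (d r : nat) (x : point d r) (i : 'I_d) (a : 'I_r) : point d r :=
  [ffun j => if j == i then a else x j].

Definition infl_i (R : numFieldType) (d r : nat) (f : point d r -> int) (i : 'I_d) : R :=
  2 * ((#|[set p : point d r * 'I_r | f p.1 != f (upd p.1 i p.2)]|)%:R
       / (#|{: point d r}| * r)%:R).

Definition infl (R : numFieldType) (d r : nat) (f : point d r -> int) : R :=
  \sum_(i < d) infl_i R f i.

Definition pm_of (d r : nat) (g : point d r -> bool) : point d r -> int :=
  fun x => (-1) ^+ (g x : nat).

(* Main.v *)
Require Import Defs.
From HB Require Import structures.
From mathcomp Require Import all_boot all_order all_algebra.
From mathcomp Require Import ring lra zify.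
Import Order.TTheory GRing.Theory Num.Theory.
Local Open Scope ring_scope.
Set Implicit Arguments. Unset Strict Implicit. Unset Printing Implicit Defensive.
Ltac natsimp := rewrite ?/bump /= ?add1n -?natr1.

Section C.
Variable R : rcfType.
Implicit Types (phi w : R -> R).

Definition csum phi (L : nat) : R := \sum_(i < L.+1) phi (2 * i%:R - L%:R).

Lemma csum_step phi L :
  csum phi L.+2 = phi (- (L.+2)%:R) + csum phi L + phi (L.+2)%:R.
Proof.
rewrite /csum big_ord_recl big_ord_recr /= addrA.
congr (_ + _ + _).
- by rewrite mulr0 sub0r.
- apply: eq_bigr => i _; congr phi; natsimp; ring.
- congr phi; natsimp; ring.
Qed.

Lemma csum_moments L :
  csum (fun s => `|s|) L <= (L.+1)%:R ^+ 2 / 2 /\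
  csum (fun s => s ^+ 2) L = L%:R * (L.+1)%:R * (L.+2)%:R / 3.
Proof.
suff: forall L, (csum (fun s => `|s|) L <= (L.+1)%:R ^+ 2 / 2 /\
  csum (fun s => s ^+ 2) L = L%:R * (L.+1)%:R * (L.+2)%:R / 3) /\
  (csum (fun s => `|s|) L.+1 <= (L.+2)%:R ^+ 2 / 2 /\
  csum (fun s => s ^+ 2) L.+1 = L.+1%:R * (L.+2)%:R * (L.+3)%:R / 3).
  by move=> /(_ L) [].
elim=> [|n [[IH1 IH2] IH3]].
  rewrite /csum !big_ord_recr !big_ord0 /=.
  rewrite !mulr0 !subrr !mulr1 !add0r ?sub0r ?normrN normr0 ?normr1.
  have -> : (2 - 1 : R) = 1 by lra.
  rewrite normr1 sqrrN !expr1n expr0n /= mul0r mul0r.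
  split; split; try lra.
split; first exact: IH3.
rewrite csum_step; split.
- rewrite normrN ger0_norm ?ler0n //.
  move: IH1; rewrite -!natr1.
  have -> : (n%:R + 1 + 1 + 1) ^+ 2 / (0 + 1 + 1) = (n%:R + 1) ^+ 2 / (0 + 1 + 1) + 2 * (n%:R + 1 + 1) :> R by field.
  lra.
- by rewrite csum_step IH2 sqrrN -!natr1; field.
Qed.

Lemma csum_split (a b c : R) L :
  csum (fun s => a + b * s ^+ 2 + c * `|s|) L =
  (L.+1)%:R * a + b * csum (fun s => s ^+ 2) L + c * csum (fun s => `|s|) L.
Proof.
rewrite /csum !big_split /= sumr_const card_ord -!mulr_sumr mulr_natl //.
Qed.

Lemma W_ge0 (lam : R) L : 0 <= lam ->
  0 <= csum (fun s => (lam ^+ 2 + 1) + 3 * s ^+ 2 + (- (4 * lam)) * `|s|) L.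
Proof.
move=> l0; rewrite csum_split; have [h1 h2] := csum_moments L.
rewrite h2.
have h : 4 * lam * csum (fun s => `|s|) L <= 4 * lam * ((L.+1)%:R ^+ 2 / 2).
  by apply: ler_wpM2l => //; lra.
move: (ler0n R L) h; rewrite -[(L.+2)%:R]natr1 -[(L.+1)%:R]natr1.
set l := (L%:R : R); set A := csum _ L => l0' h.
have -> : (l + 1) * (lam ^+ 2 + 1) + 3 * (l * (l + 1) * (l + 1 + 1) / 3) + - (4 * lam) * A
   = (l + 1) * (lam - (l + 1)) ^+ 2 + (4 * lam * ((l + 1) ^+ 2 / 2) - 4 * lam * A).
  by field.
apply: addr_ge0; last by rewrite subr_ge0.
by apply: mulr_ge0; [lra | apply: sqr_ge0].
Qed.
End C.
Section Abel.
Variable R : rcfType.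

Lemma abel_split (w : R -> R) M (q : nat -> R) :
  \sum_(v < M.+1) q v * w (2 * v%:R - M%:R) =
  q 0%N * csum w M + \sum_(v < M.+1) (q v - q 0%N) * w (2 * v%:R - M%:R).
Proof.
rewrite /csum mulr_sumr -big_split /=; apply: eq_bigr => v _; ring.
Qed.

Lemma norm_le_M (a M : nat) : (a <= M)%N -> `|2 * a%:R - M%:R : R| <= `|2 * 0%:R - M%:R : R|.
Proof.
move=> aM; rewrite mulr0 sub0r normrN (ger0_norm (ler0n _ M)) ler_norml.
have h1 : (a%:R : R) <= M%:R by rewrite ler_nat.
have h2 : 0 <= (a%:R : R) by rewrite ler0n.
apply/andP; split; lra.
Qed.

Lemma norm_end (M : nat) : `|2 * M%:R - M%:R : R| = `|2 * 0%:R - M%:R : R|.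
Proof. by rewrite mulr0 sub0r normrN; congr `|_|; ring. Qed.

Lemma abel (w : R -> R) (HW : forall L, 0 <= csum w L) M (q : nat -> R) :
  (forall v, (v <= M)%N -> 0 <= q v) ->
  (forall a b, (a <= M)%N -> (b <= M)%N ->
     `|2 * a%:R - M%:R : R| <= `|2 * b%:R - M%:R : R| -> q b <= q a) ->
  0 <= \sum_(v < M.+1) q v * w (2 * v%:R - M%:R).
Proof.
elim/ltn_ind: M q => M IH q q0 qP.
rewrite abel_split; apply: addr_ge0; first by apply: mulr_ge0 => //; apply: q0.
case: M IH q0 qP => [|[|M]] IH q0 qP.
- by rewrite big_ord_recl big_ord0 subrr mul0r addr0.
- rewrite big_ord_recl big_ord_recl big_ord0 subrr mul0r add0r addr0 /=.
  have -> : q 1%N = q 0%N.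
    apply/eqP; rewrite eq_le; apply/andP; split; apply: qP => //;
    by rewrite mulr0 mulr1 sub0r normrN; have -> : (2 - 1 : R) = 1 by lra.
  by rewrite subrr mul0r.
rewrite big_ord_recl subrr mul0r add0r big_ord_recr /=.
have -> : q (bump 0 M.+1) = q 0%N.
  rewrite /bump /= add1n.
  apply/eqP; rewrite eq_le; apply/andP; split; apply: qP => //.
    by rewrite norm_end.
  by rewrite norm_end.
rewrite subrr mul0r addr0.
have E : forall v : nat, (2 * v%:R - M%:R : R) = 2 * v.+1%:R - M.+2%:R.
  by move=> v; rewrite -!natr1; ring.
have h1 : forall v, (v <= M)%N -> 0 <= q v.+1 - q 0%N.
  move=> v vM; rewrite subr_ge0; apply: qP; [lia | lia | apply: norm_le_M; lia].
have h2 : forall a b, (a <= M)%N -> (b <= M)%N ->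
     `|2 * a%:R - M%:R : R| <= `|2 * b%:R - M%:R : R| -> q b.+1 - q 0%N <= q a.+1 - q 0%N.
  move=> a b aM bM; rewrite !E => h; rewrite lerD2r; apply: qP => //; lia.
have := IH M (leqW (ltnSn M)) (fun v => q v.+1 - q 0%N) h1 h2.
move/le_trans; apply; rewrite le_eqVlt; apply/orP; left; apply/eqP; apply: eq_bigr => v _.
by rewrite /bump /= add1n E.
Qed.
End Abel.
Section Points.
Variable R : rcfType.
Variable r : nat.

Definition V d (x : point d r) : nat := \sum_(i < d) (x i : nat).

Definition sumV d (Phi : nat -> R) : R := \sum_(x : point d r) Phi (V x).

Definition ext d (p : 'I_r * point d r) : point d.+1 r :=
  [ffun j => if unlift ord0 j is Some j' then p.2 j' else p.1].
Definition unext d (x : point d.+1 r) : 'I_r * point d r :=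
  (x ord0, [ffun j => x (lift ord0 j)]).

Lemma extK d : cancel (@ext d) (@unext d).
Proof.
case=> t y; rewrite /unext /ext /=; congr (_, _).
  by rewrite ffunE unlift_none.
by apply/ffunP => j; rewrite !ffunE liftK.
Qed.

Lemma unextK d : cancel (@unext d) (@ext d).
Proof.
move=> x; apply/ffunP => j; rewrite /ext /unext ffunE.
by case: unliftP => [j' -> | ->] /=; rewrite ?ffunE.
Qed.

Lemma V_ext d p : V (@ext d p) = (p.1 + V p.2)%N.
Proof.
rewrite /V big_ord_recl ffunE unlift_none; congr (_ + _)%N.
by apply: eq_bigr => j _; rewrite ffunE liftK.
Qed.

Lemma sumV_S d Phi : sumV d.+1 Phi = \sum_(t < r) sumV d (fun v => Phi (t + v)%N).
Proof.
rewrite /sumV (reindex (@ext d)) /=; last first.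
  by exists (@unext d) => x _; [apply: extK | apply: unextK].
rewrite pair_bigA /=; apply: eq_bigr => -[t y] _; by rewrite V_ext.
Qed.

Lemma sumV0 Phi : sumV 0 Phi = Phi 0%N.
Proof.
rewrite /sumV (eq_bigr (fun _ => Phi 0%N)); last by move=> x _; rewrite /V big_ord0.
rewrite sumr_const.
have -> : #|{: point 0 r}| = 1%N.
  by rewrite card_ffun card_ord (card_ord 0) expn0.
by rewrite mulr1n.
Qed.
End Points.
Section Window.
Variable R : rcfType.

Definition Pq (f : int -> R) (M : nat) :=
  forall a b : int, `|2 * a - M%:Z| <= `|2 * b - M%:Z| -> f b <= f a.

Lemma Pq_sym f M : Pq f M -> forall z, f (M%:Z - z) = f z.
Proof.
move=> P z; apply/eqP; rewrite eq_le; apply/andP; split; apply: P; lia.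
Qed.

Lemma window f M r' : Pq f M -> Pq (fun z => \sum_(t < r'.+1) f (z - t%:Z)) (M + r').
Proof.
move=> P.
set g := (fun z => _).
have sym : forall z, g ((M + r')%N%:Z - z) = g z.
  move=> z; rewrite /g (reindex_inj rev_ord_inj) /=.
  apply: eq_bigr => t _; rewrite -(Pq_sym P); congr f.
  rewrite subnS; have := ltn_ord t; lia.
have adj : forall z, (M + r')%N%:Z <= 2 * z + 1 -> g (z + 1) <= g z.
  move=> z hz; rewrite /g big_ord_recl big_ord_recr /=.
  have E : \sum_(i < r') f (z + 1 - (bump 0 i)%:Z) = \sum_(i < r') f (z - i%:Z).
    by apply: eq_bigr => i _; congr f; rewrite /bump /=; lia.
  rewrite E subr0 addrC lerD2r; apply: P; lia.
have chain : forall a (n : nat), (M + r')%N%:Z <= 2 * a -> g (a + n%:Z) <= g a.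
  move=> a n ha; elim: n => [|n IH]; first by rewrite addr0.
  apply: le_trans IH; have -> : a + n.+1%:Z = (a + n%:Z) + 1 by lia.
  apply: adj; lia.
move=> a b hab.
pose st z := if ((M + r')%N%:Z <= 2 * z) then z else (M + r')%N%:Z - z.
have gst : forall z, g (st z) = g z by move=> z; rewrite /st; case: ifP => // _; rewrite sym.
have hst : forall z, (M + r')%N%:Z <= 2 * st z by move=> z; rewrite /st; case: ifP; lia.
have nst : forall z, 2 * st z - (M + r')%N%:Z = `|2 * z - (M + r')%N%:Z| by move=> z; rewrite /st; case: ifP; lia.
rewrite -gst -(gst a).
have : st a <= st b by have := nst a; have := nst b; lia.
move=> le_ab.
have -> : st b = st a + (absz (st b - st a))%:Z by lia.
exact: chain.
Qed.
End Window.
Lemma window' (R : rcfType) (f : int -> R) M r : (0 < r)%N -> Pq f M ->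
  Pq (fun z => \sum_(t < r) f (z - t%:Z)) (M + r.-1).
Proof. by case: r => // r' _; apply: window. Qed.

Section Counts.
Variable R : rcfType.
Variable r : nat.
Hypothesis r0 : (0 < r)%N.

Definition q d (z : int) : R := @sumV R r d (fun v => (v%:Z == z)%:R).

Lemma q_S d z : q d.+1 z = \sum_(t < r) q d (z - t%:Z).
Proof.
rewrite /q sumV_S; apply: eq_bigr => t _; rewrite /sumV; apply: eq_bigr => x _.
by congr (_%:R); apply/eqP/eqP; lia.
Qed.

Lemma q_P d : Pq (q d) (d * r.-1).
Proof.
elim: d => [|d IH].
  move=> a b; rewrite /q !sumV0 mul0n subr0 => h.
  case: (eqVneq b 0) => [eb|nb].
    have ea : a = 0 by lia.
    by rewrite ea.
  by rewrite ler0n.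
have -> : (d.+1 * r.-1 = d * r.-1 + r.-1)%N by rewrite mulSn addnC.
have W := window' r0 IH.
by move=> a b h; rewrite !q_S; apply: W.
Qed.
End Counts.
Lemma predn_natr (R : rcfType) (n : nat) : (0 < n)%N -> (n.-1%:R : R) = n%:R - 1.
Proof. by case: n => // n _; rewrite -natr1 addrK. Qed.

Section Moments.
Variable R : rcfType.
Variable r : nat.
Hypothesis r0 : (0 < r)%N.

Lemma V_le d (x : point d r) : (V x <= d * r.-1)%N.
Proof.
rewrite /V; apply: (@leq_trans (\sum_(i < d) r.-1)).
  by apply: leq_sum => i _; have := ltn_ord (x i); lia.
by rewrite sum_nat_const card_ord.
Qed.

Lemma sumV_q d (Phi : nat -> R) :
  @sumV R r d Phi = \sum_(v < (d * r.-1).+1) q R r d v * Phi v.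
Proof.
rewrite /q /sumV; symmetry.
under eq_bigr do rewrite mulr_suml.
rewrite exchange_big /=; apply: eq_bigr => x _.
have hx : (V x < (d * r.-1).+1)%N by rewrite ltnS V_le.
rewrite (bigD1 (Ordinal hx)) //= eqxx mul1r big1 ?addr0 //.
move=> v nv; have -> : ((V x)%:Z == (v : nat)%:Z) = false.
  apply/negP => /eqP e; move: nv; have -> : v = Ordinal hx by apply: val_inj => /=; lia.
  by rewrite eqxx.
by rewrite mul0r.
Qed.

Lemma csum_id L : csum (fun s : R => s) L = 0.
Proof.
suff: forall L, csum (fun s : R => s) L = 0 /\ csum (fun s : R => s) L.+1 = 0 by move=> /(_ L) [].
elim=> [|n [IH1 IH2]].
  rewrite /csum !big_ord_recr !big_ord0 /= !mulr0 !mulr1 !add0r.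
  by split; [rewrite oppr0 | lra].
split=> //; rewrite csum_step IH1 addr0 addNr //.
Qed.

Lemma sum_ord_csum (phi : R -> R) :
  \sum_(t < r) phi (2 * t%:R - r.-1%:R) = csum phi r.-1.
Proof.
rewrite /csum; case: r r0 => // r' _ /=; by [].
Qed.

Definition Nd d : R := @sumV R r d (fun _ => 1).
Definition M d := (d * r.-1)%N.

Lemma Nd_S d : Nd d.+1 = r%:R * Nd d.
Proof. by rewrite /Nd sumV_S sumr_const card_ord mulr_natl. Qed.

Lemma sumV_add d (F G : nat -> R) : @sumV R r d (fun v => F v + G v) = @sumV R r d F + @sumV R r d G.
Proof. by rewrite /sumV big_split. Qed.
Lemma sumV_scal d c (F : nat -> R) : @sumV R r d (fun v => c * F v) = c * @sumV R r d F.
Proof. by rewrite /sumV mulr_sumr. Qed.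
Lemma sumV_cst d (c : R) : @sumV R r d (fun v => c) = c * Nd d.
Proof. by rewrite /Nd -sumV_scal; apply: eq_bigr => x _; rewrite mulr1. Qed.
Lemma sumV_ext d (F G : nat -> R) : (forall v, F v = G v) -> @sumV R r d F = @sumV R r d G.
Proof. by move=> h; apply: eq_bigr => x _; rewrite h. Qed.

Lemma moments d :
  @sumV R r d (fun v => 2 * v%:R - (M d)%:R) = 0 /\
  @sumV R r d (fun v => (2 * v%:R - (M d)%:R) ^+ 2) = Nd d * d%:R * (r%:R ^+ 2 - 1) / 3.
Proof.
have cr : (r.-1%:R : R) = r%:R - 1 by apply: predn_natr.
have s1 : \sum_(t < r) (2 * t%:R - r.-1%:R : R) = 0 by rewrite (sum_ord_csum id) csum_id.
have s2 : \sum_(t < r) (2 * t%:R - r.-1%:R : R) ^+ 2 = r%:R * (r%:R ^+ 2 - 1) / 3.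
  rewrite (sum_ord_csum (fun s => s ^+ 2)); have [_ ->] := csum_moments R r.-1.
  by rewrite -[r.-1.+2%:R]natr1 -[r.-1.+1%:R]natr1 cr; field.
elim: d => [|d [IH1 IH2]].
  rewrite /M !sumV0 mul0n.
  split; first by rewrite mulr0 subrr.
  by rewrite mulr0 subrr expr0n /= mulr0 !mul0r.
have EM : forall (t v : nat), (2 * (t + v)%N%:R - (M d.+1)%:R : R) =
   (2 * v%:R - (M d)%:R) + (2 * t%:R - r.-1%:R).
  by move=> t v; rewrite /M mulSn natrD natrD; ring.
split.
  rewrite sumV_S.
  under eq_bigr do rewrite (sumV_ext _ (EM _)) sumV_add IH1 sumV_cst add0r.
  by rewrite -mulr_suml s1 mul0r.
rewrite sumV_S.
under eq_bigr => t _.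
  rewrite (@sumV_ext d _ (fun v => (2 * v%:R - (M d)%:R) ^+ 2 +
     (2 * (2 * t%:R - r.-1%:R)) * (2 * v%:R - (M d)%:R) + (2 * t%:R - r.-1%:R) ^+ 2)); last first.
    by move=> v; rewrite EM; ring.
  rewrite sumV_add sumV_add sumV_scal IH1 IH2 mulr0 addr0 sumV_cst.
  over.
rewrite big_split /= sumr_const card_ord -mulr_suml s2 Nd_S -mulr_natr.
by rewrite -natr1; field.
Qed.
End Moments.
Section MainC.
Variable R : rcfType.
Variable r : nat.
Hypothesis r0 : (0 < r)%N.

Lemma cast_norm (a M : nat) :
  `|2 * a%:R - M%:R : R| = (`|2 * a%:Z - M%:Z| : int)%:~R.
Proof. by rewrite intr_norm rmorphB rmorphM /=. Qed.

Lemma mainC d (lam : R) : 0 <= lam ->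
  4 * lam * @sumV R r d (fun v => `|2 * v%:R - (M r d)%:R|) <=
  Nd R r d * (lam ^+ 2 + 1) + 3 * @sumV R r d (fun v => (2 * v%:R - (M r d)%:R) ^+ 2).
Proof.
move=> l0.
pose w := fun s : R => (lam ^+ 2 + 1) + 3 * s ^+ 2 + (- (4 * lam)) * `|s|.
have H : 0 <= @sumV R r d (fun v => w (2 * v%:R - (M r d)%:R)).
  rewrite (@sumV_q R r r0 d); apply: (@abel R w _ (M r d) (fun v : nat => q R r d v)).
  - by move=> L; apply: W_ge0.
  - by move=> v _; rewrite /q /sumV; apply: sumr_ge0 => x _; apply: ler0n.
  - move=> a b _ _; rewrite !cast_norm ler_int => h.
    by apply: (@q_P R r r0 d).
rewrite /w sumV_add sumV_add sumV_cst sumV_scal sumV_scal in H.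
rewrite mulrC; lra.
Qed.
End MainC.
Lemma sum_lt (R : rcfType) n t : \sum_(a < n) ((a < t)%N%:R : R) = (minn t n)%:R.
Proof.
elim: n => [|n IH]; first by rewrite big_ord0 minn0.
rewrite big_ord_recr /= IH -natrD; congr (_%:R); case: (ltnP n t) => h /=; lia.
Qed.
Lemma sum_gt (R : rcfType) n t : \sum_(a < n) ((t < a)%N%:R : R) = (n - t.+1)%:R.
Proof.
elim: n => [|n IH]; first by rewrite big_ord0.
rewrite big_ord_recr /= IH -natrD; congr (_%:R); case: (ltnP t n) => h /=; lia.
Qed.

Section StepB.
Variable R : rcfType.
Variables d r : nat.
Implicit Types (x y : point d r) (h : point d r -> bool).

Lemma upd_at x i a : upd x i a i = a.
Proof. by rewrite /upd ffunE eqxx. Qed.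
Lemma upd_upd x i a b : upd (upd x i a) i b = upd x i b.
Proof. by apply/ffunP => j; rewrite !ffunE; case: eqP. Qed.
Lemma upd_self x i : upd x i (x i) = x.
Proof. by apply/ffunP => j; rewrite !ffunE; case: eqP => // ->. Qed.
Lemma pleq_updr x i (a : 'I_r) : (x i <= a)%N -> pleq x (upd x i a).
Proof. by move=> h; apply/forallP => j; rewrite ffunE; case: eqP => [->|]. Qed.
Lemma pleq_updl x i (a : 'I_r) : (a <= x i)%N -> pleq (upd x i a) x.
Proof. by move=> h; apply/forallP => j; rewrite ffunE; case: eqP => [->|]. Qed.

Lemma cardR (T : finType) (P : pred T) : (#|[set p | P p]|%:R : R) = \sum_p (P p)%:R.
Proof.
rewrite -sum1_card natr_sum big_mkcond /=; apply: eq_bigr => p _; rewrite inE.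
by case: (P p).
Qed.

Lemma pm_neq h x y : (pm_of h x != pm_of h y) = (h x != h y).
Proof. by rewrite /pm_of; case: (h x); case: (h y). Qed.

Definition sig_i i (p : point d r * 'I_r) : point d r * 'I_r := (upd p.1 i p.2, p.1 i).
Lemma sig_invol i : involutive (sig_i i).
Proof. by case=> x a; rewrite /sig_i /= upd_upd upd_self upd_at. Qed.

Lemma pairE (F : point d r * 'I_r -> R) : \sum_p F p = \sum_x \sum_a F (x, a).
Proof. by rewrite pair_bigA; apply: eq_bigr => -[]. Qed.

Lemma cnt_formula h i : (forall x y, pleq x y -> h x -> h y) ->
  (#|[set p : point d r * 'I_r | pm_of h p.1 != pm_of h (upd p.1 i p.2)]|%:R : R) =
  2 * \sum_x (h x)%:R * (2 * (x i)%:R - r.-1%:R).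
Proof.
move=> hm; rewrite cardR.
have pt : forall p : point d r * 'I_r,
  ((pm_of h p.1 != pm_of h (upd p.1 i p.2))%:R : R) =
  (p.1 i < p.2)%N%:R * ((h (upd p.1 i p.2))%:R - (h p.1)%:R) +
  (p.2 < p.1 i)%N%:R * ((h p.1)%:R - (h (upd p.1 i p.2))%:R).
  case=> x a /=; rewrite pm_neq.
  case: (ltngtP (x i) a) => [lt|gt|eq].
  -     move: (hm _ _ (pleq_updr (ltnW lt))).
    case: (h x); case: (h (upd x i a)) => /= H; try (by have := H isT);
      rewrite /nat_of_bool ?mulr1n ?mulr0n; ring.
  -     move: (hm _ _ (pleq_updl (ltnW gt))).
    case: (h x); case: (h (upd x i a)) => /= H; try (by have := H isT);
      rewrite /nat_of_bool ?mulr1n ?mulr0n; ring.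
  - have -> : a = x i by apply: val_inj.
    by rewrite upd_self eqxx /= !mul0r addr0.
rewrite (eq_bigr _ (fun p _ => pt p)) big_split /=.
have reA : \sum_(p : point d r * 'I_r) (p.1 i < p.2)%N%:R * (h (upd p.1 i p.2))%:R =
   \sum_(p : point d r * 'I_r) (p.2 < p.1 i)%N%:R * (h p.1)%:R :> R.
  rewrite (reindex_inj (inv_inj (sig_invol i))) /=; apply: eq_bigr => -[x a] _ /=.
  by rewrite upd_at upd_upd upd_self.
have reD : \sum_(p : point d r * 'I_r) (p.2 < p.1 i)%N%:R * (h (upd p.1 i p.2))%:R =
   \sum_(p : point d r * 'I_r) (p.1 i < p.2)%N%:R * (h p.1)%:R :> R.
  rewrite (reindex_inj (inv_inj (sig_invol i))) /=; apply: eq_bigr => -[x a] _ /=.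
  by rewrite upd_at upd_upd upd_self.
have E : forall p : point d r * 'I_r,
  (p.1 i < p.2)%N%:R * ((h (upd p.1 i p.2))%:R - (h p.1)%:R) +
  (p.2 < p.1 i)%N%:R * ((h p.1)%:R - (h (upd p.1 i p.2))%:R) =
  ((p.1 i < p.2)%N%:R * (h (upd p.1 i p.2))%:R - (p.1 i < p.2)%N%:R * (h p.1)%:R) +
  ((p.2 < p.1 i)%N%:R * (h p.1)%:R - (p.2 < p.1 i)%N%:R * (h (upd p.1 i p.2))%:R) :> R.
  by move=> p; ring.
rewrite -big_split /= (eq_bigr _ (fun p _ => E p)) big_split /= !sumrB reA reD.
rewrite -!sumrB -big_split pairE /= mulr_sumr; apply: eq_bigr => x _.
have -> : \sum_(a < r) (((a < x i)%N%:R * (h x)%:R - (x i < a)%N%:R * (h x)%:R) +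
   ((a < x i)%N%:R * (h x)%:R - (x i < a)%N%:R * (h x)%:R)) =
   2 * (h x)%:R * (\sum_(a < r) (a < x i)%N%:R - \sum_(a < r) (x i < a)%N%:R) :> R.
  rewrite -sumrB mulr_sumr; apply: eq_bigr => a _; ring.
rewrite sum_lt sum_gt.
have xr := ltn_ord (x i).
rewrite (minn_idPl (ltnW xr)).
rewrite (natrB _ (xr : ((x i).+1 <= r)%N)) -natr1 (predn_natr R (leq_ltn_trans (leq0n _) xr)).
ring.
Qed.
End StepB.
Section Mono.
Variable R : rcfType.

Lemma U_eq d r (x : point d r) :
  \sum_(i < d) (2 * (x i)%:R - r.-1%:R : R) = 2 * (V x)%:R - (M r d)%:R.
Proof.
rewrite sumrB -mulr_sumr sumr_const card_ord /V natr_sum /M natrM mulr_natl.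
by rewrite mulrC mulr_natr.
Qed.

Lemma monotone_infl d r (h : point d r -> bool) :
  (forall x y, pleq x y -> h x -> h y) ->
  infl R (pm_of h) <= Num.sqrt (d%:R : R).
Proof.
move=> hm.
case: (posnP d) => [d0|d0].
  by rewrite /infl big1 ?sqrtr_ge0 // => i _; have := ltn_ord i; rewrite [X in (_ < X)%N]d0.
case: (posnP r) => [r0|r0].
  rewrite /infl big1 ?sqrtr_ge0 // => i _.
  by rewrite /infl_i [X in (_ * X)%N]r0 muln0 invr0 mulr0 mulr0.
set N := #|{: point d r}|.
have NE : (N%:R : R) = Nd R r d by rewrite /Nd /sumV sumr_const.
set D := ((N * r)%N%:R : R).
have -> : infl R (pm_of h) = 2 / D * \sum_(i < d) (#|[set p : point d r * 'I_r |
    pm_of h p.1 != pm_of h (upd p.1 i p.2)]|%:R).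
  by rewrite /infl /infl_i mulr_sumr; apply: eq_bigr => i _; rewrite -mulrA [_^-1 * _]mulrC.
under eq_bigr do rewrite cnt_formula //.
rewrite -mulr_sumr exchange_big /=.
under eq_bigr do rewrite -mulr_sumr U_eq.
set S := @sumV R r d (fun v => `|2 * v%:R - (M r d)%:R|).
have S1 : \sum_(x : point d r) (2 * (V x)%:R - (M r d)%:R : R) = 0.
  by have [H _] := moments R r0 d; exact: H.
have hS : 2 * \sum_(x : point d r) (h x)%:R * (2 * (V x)%:R - (M r d)%:R) <= S.
  have -> : S = \sum_(x : point d r) (`|2 * (V x)%:R - (M r d)%:R| + (2 * (V x)%:R - (M r d)%:R)).
    by rewrite big_split /= S1 addr0.
  rewrite mulr_sumr.
  apply: ler_sum => x _; set u := (2 * _ - _ : R).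
  case: (h x) => /=; rewrite ?mulr1n ?mulr0n ?mul1r ?mul0r ?mulr0.
    by have := ler_norm u; lra.
  by have := ler_norm (- u); rewrite normrN; lra.
set T := \sum_(i : point d r) _.
set s := Num.sqrt (d%:R : R).
have s2 : s ^+ 2 = d%:R by rewrite sqr_sqrtr // ler0n.
have d1 : (1 : R) <= d%:R by rewrite ler1n.
have sp : 0 < s by rewrite sqrtr_gt0 ltr0n.
have rp : (0 : R) < r%:R by rewrite ltr0n.
have Np : (0 : R) < N%:R by rewrite ltr0n /N card_ffun !card_ord expn_gt0 r0.
have key : 2 * S <= N%:R * r%:R * s.
  have H := @mainC R r r0 d (r%:R * s) (mulr_ge0 (ltW rp) (ltW sp)).
  have [_ H2] := moments R r0 d.
  rewrite H2 -NE -s2 in H.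
  rewrite -/S in H.
  have H' : 4 * (r%:R * s) * S <= 2 * (r%:R * s) * (N%:R * r%:R * s).
    apply: (le_trans H).
    have : N%:R * (1 - s ^+ 2) <= 0 by apply: mulr_ge0_le0; [exact: ltW | rewrite s2; lra].
    move=> h0; rewrite -subr_ge0.
    have -> : 2 * (r%:R * s) * (N%:R * r%:R * s) -
      (N%:R * ((r%:R * s) ^+ 2 + 1) + 3 * (N%:R * s ^+ 2 * (r%:R ^+ 2 - 1) / 3)) =
      - (N%:R * (1 - s ^+ 2)) by field.
    by rewrite oppr_ge0.
  have rs : 0 < 2 * (r%:R * s) by apply: mulr_gt0 => //; apply: mulr_gt0.
  have e : 4 * (r%:R * s) * S = 2 * (r%:R * s) * (2 * S) by ring.
  by rewrite e ler_pM2l in H'.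
have Dp : 0 < D by rewrite /D natrM; apply: mulr_gt0.
have -> : 2 / D * (2 * T) = (2 * (2 * T)) / D by rewrite mulrAC.
rewrite ler_pdivrMr //.
apply: (le_trans (_ : 2 * (2 * T) <= 2 * S)); first by rewrite ler_pM2l.
apply: (le_trans key); rewrite /D natrM; lra.
Qed.
End Mono.
Section KMono.
Variables d r : nat.
Variable g : point d r -> bool.

Lemma pleq_refl (x : point d r) : pleq x x.
Proof. by apply/forallP => i. Qed.
Lemma pleq_trans (x y z : point d r) : pleq x y -> pleq y z -> pleq x z.
Proof.
move=> /forallP h1 /forallP h2; apply/forallP => i; exact: leq_trans (h1 i) (h2 i).
Qed.

Fixpoint altc (j : nat) (y : point d r) : bool :=
  match j with
  | 0 => g y
  | j'.+1 => [exists z, pleq z y && altc j' z && (g z != g y)]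
  end.

Definition Hc j (x : point d r) := [exists y, pleq y x && altc j y].
Definition Hc' j x := if j is j'.+1 then Hc j' x else true.

Lemma altc_g j y : altc j y -> g y = ~~ odd j.
Proof.
elim: j y => [|j IH] y /=; first by [].
move=> /existsP [z /andP [/andP [_ hz] ne]].
by move: ne; rewrite (IH _ hz); case: (g y); case: (odd j).
Qed.

Lemma altc_chain j y : altc j y -> exists c : nat -> point d r,
  [/\ c j = y, (forall i, (i < j)%N -> pleq (c i) (c i.+1)), g (c 0%N) = true &
      (forall i, (i < j)%N -> g (c i) != g (c i.+1))].
Proof.
elim: j y => [|j IH] y /=.
  by move=> gy; exists (fun _ => y); split.
move=> /existsP [z /andP [/andP [pz hz] ne]].
have [c [c1 c2 c3 c4]] := IH _ hz.
exists (fun i => if i == j.+1 then y else c i); split.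
- by rewrite eqxx.
- move=> i ij; rewrite eqSS (ltn_eqF ij).
  case: (eqVneq i j) => [ij'|ne2]; first by rewrite ij' c1.
  by apply: c2; lia.
- by [].
- move=> i ij; rewrite eqSS (ltn_eqF ij).
  case: (eqVneq i j) => [ij'|ne2]; first by rewrite ij' c1.
  by apply: c4; lia.
Qed.

Lemma Hc_k_false k x : k_monotone k g -> Hc k x = false.
Proof.
move=> km; apply/negbTE/negP; rewrite /Hc => /existsP [y /andP [_ hy]].
have [c [c1 c2 c3 c4]] := altc_chain hy.
by apply: km; exists c; split.
Qed.

Lemma Hc_mono j x y : pleq x y -> Hc j x -> Hc j y.
Proof.
rewrite /Hc => pxy /existsP [z /andP [pz hz]]; apply/existsP; exists z.
by rewrite hz andbT; apply: pleq_trans pxy.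
Qed.

Lemma boundary (b : nat -> bool) n : b 0%N -> ~~ b n ->
  exists j, [/\ (j < n)%N, b j & ~~ b j.+1].
Proof.
elim: n => [|n IH] b0 bn; first by rewrite b0 in bn.
case: (boolP (b n)) => bn'.
  by exists n; split.
have [j [j1 j2 j3]] := IH b0 bn'; exists j; split => //; lia.
Qed.

Lemma boundary_g j x : Hc' j x -> ~~ Hc' j.+1 x -> g x = odd j.
Proof.
case: j => [|j] /=; rewrite /Hc.
  move=> _ nx; case: (boolP (g x)) => // gx; exfalso; move/negP: nx; apply.
  by apply/existsP; exists x; rewrite pleq_refl.
move=> /existsP [y /andP [py hy]] nx.
have gy := altc_g hy.
case: (eqVneq (g y) (g x)) => [<-|ne]; first by rewrite gy; case: (odd j).
exfalso; move/negP: nx; apply; apply/existsP; exists x; rewrite pleq_refl /=.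
by apply/existsP; exists y; rewrite py hy ne.
Qed.

Lemma diff_H k x y : k_monotone k g -> g x != g y ->
  exists j, (j < k)%N /\ Hc j x != Hc j y.
Proof.
move=> km gxy.
have nk : ~~ Hc' k.+1 x by rewrite /= (Hc_k_false x km).
have [j [jk bj bj1]] := @boundary (fun j => Hc' j x) k.+1 isT nk.
have gxj := boundary_g bj bj1.
case: (boolP (Hc' j y)) => hy; last first.
  case: j jk bj bj1 gxj hy => [|j] //= jk bj bj1 gxj hy.
  exists j; split; first by lia.
  by rewrite bj (negbTE hy).
case: (boolP (Hc' j.+1 y)) => hy1; last first.
  by rewrite gxj (boundary_g hy hy1) eqxx in gxy.
exists j; split.
  case: (ltngtP j k) => // [|ej]; first by lia.
  by rewrite /= ej (Hc_k_false y km) in hy1.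
by move: bj1 hy1 => /= /negbTE -> ->.
Qed.

End KMono.
Unset Implicit Arguments.
Theorem lemma6p6 (R : rcfType) (d r k : nat) (g : point d r -> bool) :
  k_monotone k g ->
  infl R (pm_of g) <= k%:R * Num.sqrt (d%:R : R).
Proof.
move=> km.
have step : forall i, infl_i R (pm_of g) i <= \sum_(j < k) infl_i R (pm_of (Hc g j)) i.
  move=> i; rewrite /infl_i -mulr_sumr -mulr_suml.
  apply: ler_wpM2l => //; apply: ler_wpM2r; first by rewrite invr_ge0 ler0n.
  under eq_bigr => j _ do rewrite (@cardR R _ (fun p : point d r * 'I_r =>
     pm_of (Hc g j) p.1 != pm_of (Hc g j) (upd p.1 i p.2))).
  rewrite (@cardR R _ (fun p : point d r * 'I_r => pm_of g p.1 != pm_of g (upd p.1 i p.2))).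
  rewrite exchange_big /=; apply: ler_sum => p _.
  case: (boolP (pm_of g p.1 != pm_of g (upd p.1 i p.2))) => h; last first.
    by rewrite /= sumr_ge0.
  rewrite pm_neq in h.
  have [j [jk hj]] := diff_H km h.
  rewrite (bigD1 (Ordinal jk)) //= pm_neq hj /=.
  by rewrite lerDl sumr_ge0.
apply: (le_trans (ler_sum _ (fun i _ => step i))).
rewrite exchange_big /=.
apply: (@le_trans _ _ (\sum_(j < k) Num.sqrt (d%:R : R))).
  by apply: ler_sum => j _; apply: monotone_infl => x y; exact: Hc_mono.
by rewrite sumr_const card_ord mulr_natl.
Qed.
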